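(* An nfa $N$ accepting a regular language $L$ is subatomic if and only if the transition monoid of the dfa $\mathrm{rsc}(N^r)$ is isomorphic (as a monoid) to the syntactic monoid $\mathrm{Syn}(L^r)$.
   Context: An nfa $N=(Q,\delta,I,F)$: finite states, transition relations $\delta_a$, initial states $I$, final states $F$ (several initial states allowed). $N^r$ is the reverse nfa (transitions reversed, $I$ and $F$ swapped), accepting $L^r=\{w^r:w\in L\}$. $\mathrm{rsc}(N)$ is the dfa whose states are the subsets of $Q$ reachable from $I$ under $X\mapsto\delta_a[X]$, initial state $I$, final states the subsets meeting $F$. $N$ is subatomic if every state of $N$ accepts a language in $\mathrm{BLRQ}(L)$, the boolean subalgebra of $\mathcal{P}(\Sigma^* )$ generated by all two-sided derivatives $u^{-1}Lv^{-1}=\{w:uwv\in L\}$. The transition monoid of a dfa $D$ with transition functions $\delta_a$ is $\{\delta_w:w\in\Sigma^*\}$, where $\delta_w=\delta_{a_n}\circ\cdots\circ\delta_{a_1}$ for $w=a_1\cdots a_n$, with multiplication $\delta_v\cdot\delta_w=\delta_{vw}$ and unit $\delta_\epsilon$. The syntactic monoid $\mathrm{Syn}(K)$ is $\Sigma^*$ modulo the congruence $v\equiv_K w\iff\forall x,y\,(xvy\in K\Leftrightarrow xwy\in K)$. *)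

(* Defs.v *)
From mathcomp Require Import all_boot.

From Stdlib Require Import ClassicalEpsilon.

Set Implicit Arguments.
Unset Strict Implicit.
Unset Printing Implicit Defensive.

Definition lang (Sigma : Type) := seq Sigma -> bool.

(** [delta a p q] means there is an [a]-transition from [p] to [q].
    Several initial states are allowed. *)
Record nfa (Sigma Q : finType) := Nfa {
  delta : Sigma -> Q -> Q -> bool;
  init : {set Q};
  final : {set Q}
}.

Section NFA.
Variables (Sigma Q : finType).
Implicit Types (N : nfa Sigma Q) (X : {set Q}) (w : seq Sigma).

Definition step N (a : Sigma) X : {set Q} :=
  [set q | [exists p in X, delta N a p q]].

Definition steps N w X : {set Q} := foldl (fun Y a => step N a Y) X w.

Definition set_lang N X : lang Sigma := fun w => steps N w X :&: final N != set0.
Definition state_lang N (q : Q) : lang Sigma := set_lang N [set q].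
Definition nfa_lang N : lang Sigma := set_lang N (init N).

Definition rev_nfa N : nfa Sigma Q :=
  Nfa (fun a p q => delta N a q p) (final N) (init N).

(** States of the dfa [rsc N]: subsets of [Q] reachable from [init N]. *)
Definition rsc_state N := {X : {set Q} | exists u, X = steps N u (init N)}.

Lemma steps_cat N u v X : steps N (u ++ v) X = steps N v (steps N u X).
Proof. by rewrite /steps foldl_cat. Qed.

Lemma rsc_step_proof N w (X : rsc_state N) :
  exists u, steps N w (proj1_sig X) = steps N u (init N).
Proof.
case: X => X [u Hu] /=; exists (u ++ w); by rewrite steps_cat Hu.
Qed.

Definition rsc_trans N w (X : rsc_state N) : rsc_state N :=
  exist _ (steps N w (proj1_sig X)) (rsc_step_proof w X).

End NFA.

Inductive bexpr (Sigma : Type) :=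
| BQuot of seq Sigma & seq Sigma
| BEmpty
| BCompl of bexpr Sigma
| BUnion of bexpr Sigma & bexpr Sigma.

Fixpoint beval (Sigma : Type) (L : lang Sigma) (e : bexpr Sigma) : lang Sigma :=
  match e with
  | BQuot u v => fun w => L (u ++ w ++ v)
  | BEmpty => fun _ => false
  | BCompl e1 => fun w => ~~ beval L e1 w
  | BUnion e1 e2 => fun w => beval L e1 w || beval L e2 w
  end.

Definition in_BLRQ (Sigma : Type) (L K : lang Sigma) : Prop :=
  exists e : bexpr Sigma, forall w, K w = beval L e w.

Definition subatomic (Sigma Q : finType) (N : nfa Sigma Q) : Prop :=
  forall q : Q, in_BLRQ (nfa_lang N) (state_lang N q).

Record monoid_str := MonoidStr {
  mcar : Type;
  mmul : mcar -> mcar -> mcar;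
  munit : mcar
}.

Definition monoid_iso (M1 M2 : monoid_str) : Prop :=
  exists f : mcar M1 -> mcar M2,
    bijective f /\
    (forall x y, f (mmul x y) = mmul (f x) (f y)) /\
    f (munit M1) = munit M2.

(** The monoid [{ r w | w \in Sigma^* }] with multiplication
    [r v . r w = r (v w)] and unit [r epsilon]; used only when the kernel of
    [r] is a congruence of [Sigma^*] (so the product is well defined). *)
Section WordQuotient.
Variables (Sigma T : Type) (r : seq Sigma -> T).

Definition wq_car := {t : T | exists w, t = r w}.
Definition wq_elt (w : seq Sigma) : wq_car := exist _ (r w) (ex_intro _ w erefl).
Definition wq_rep (t : wq_car) : seq Sigma :=
  proj1_sig (constructive_indefinite_description _ (proj2_sig t)).
Definition wq_mul (s t : wq_car) : wq_car := wq_elt (wq_rep s ++ wq_rep t).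

Definition word_quotient_monoid : monoid_str :=
  MonoidStr wq_mul (wq_elt [::]).
End WordQuotient.

Definition rsc_transition_monoid (Sigma Q : finType) (N : nfa Sigma Q) :=
  word_quotient_monoid (fun w : seq Sigma => @rsc_trans Sigma Q N w).

(** Syntactic monoid of K: [Sigma^*] modulo [v == w <-> forall x y,
    (x v y \in K <-> x w y \in K)]; the class of [w] is represented by its
    context function [fun x y => K (x w y)]. *)
Definition syn_ctx (Sigma : Type) (K : lang Sigma) (w : seq Sigma) :=
  fun x y : seq Sigma => K (x ++ w ++ y).

Definition syntactic_monoid (Sigma : Type) (K : lang Sigma) :=
  word_quotient_monoid (syn_ctx K).

Definition rev_lang (Sigma : Type) (L : lang Sigma) : lang Sigma :=
  fun w => L (rev w).

(* Main.v *)
Require Import Defs.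
From mathcomp Require Import all_boot.
From Stdlib Require Import FunctionalExtensionality ProofIrrelevance ClassicalEpsilon.

Set Implicit Arguments.
Unset Strict Implicit.
Unset Printing Implicit Defensive.

Lemma sig_eq (A : Type) (P : A -> Prop) (x y : sig P) :
  proj1_sig x = proj1_sig y -> x = y.
Proof.
case: x => x px; case: y => y py /= E; subst y; f_equal; apply: proof_irrelevance.
Qed.

Lemma wq_elt_rep (S T : Type) (r : seq S -> T) (t : wq_car r) :
  wq_elt r (wq_rep t) = t.
Proof.
apply: sig_eq => /=; rewrite /wq_rep.
case: (constructive_indefinite_description _ _) => w /= ->. by [].
Qed.

Lemma r_rep (S T : Type) (r : seq S -> T) (w : seq S) :
  r (wq_rep (wq_elt r w)) = r w.
Proof.
rewrite /wq_rep; case: (constructive_indefinite_description _ _) => u /= -> //.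
Qed.

Lemma fin_surj_injK (K : finType) (G : K -> K)
  (Gsurj : forall k, exists j, G j = k) : injective G.
Proof.
pose h k := odflt k [pick j | G j == k].
have hK : cancel h G.
  move=> k; rewrite /h; case: pickP => [j /eqP //|].
  by case: (Gsurj k) => j Hj /(_ j); rewrite Hj eqxx.
have hinj : injective h := can_inj hK.
case: (injF_bij hinj) => h' hh' h'h.
have GE : G =1 h' by move=> x; rewrite -{1}(h'h x) hK.
move=> x y; rewrite !GE => E.
by rewrite -(h'h x) -(h'h y) E.
Qed.

Lemma fin_surj_inj (T : Type) (K : finType) (code : T -> K)
  (code_inj : injective code) (g : T -> T)
  (gsurj : forall t, exists s, g s = t) : injective g.
Proof.
pose P k := exists t, code t = k.
pose G k := match excluded_middle_informative (P k) with
  | left pf => code (g (proj1_sig (constructive_indefinite_description _ pf)))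
  | right _ => k end.
have GE : forall s, G (code s) = code (g s).
  move=> s; rewrite /G; case: excluded_middle_informative => [pf|[]]; last by exists s.
  by case: constructive_indefinite_description => t /= /code_inj ->.
have Ginj : injective G.
  apply: fin_surj_injK => k.
  case: (excluded_middle_informative (P k)) => [[t <-]|nP].
    by case: (gsurj t) => s <-; exists (code s); rewrite GE.
  by exists k; rewrite /G; case: excluded_middle_informative.
by move=> x y E; apply: code_inj; apply: Ginj; rewrite !GE E.
Qed.

Section Aut.
Variables (Sigma Q : finType) (N : nfa Sigma Q).

Lemma mem_step a X p' : (p' \in step N a X) = [exists p in X, delta N a p p'].
Proof. by rewrite inE. Qed.

Lemma mem_step1 a p p' : (p' \in step N a [set p]) = delta N a p p'.
Proof.
rewrite mem_step; apply/existsP/idP => [[x /andP[]]|H].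
  by rewrite in_set1 => /eqP ->.
by exists p; rewrite in_set1 eqxx.
Qed.

Lemma mem_steps w : forall X q,
  (q \in steps N w X) = [exists p in X, q \in steps N w [set p]].
Proof.
elim: w => [|a w IH] X q /=.
  rewrite /steps /=; apply/idP/existsP => [qX|[p /andP[pX]]].
    by exists q; rewrite qX in_set1 eqxx.
  by rewrite in_set1 => /eqP ->.
rewrite /steps /= -/(steps N w _) IH.
apply/existsP/existsP => [[p' /andP[]]|[p /andP[pX]]].
  rewrite mem_step => /existsP [p /andP[pX d]] H.
  exists p; rewrite pX /= -/(steps N w _) IH.
  by apply/existsP; exists p'; rewrite mem_step1 d.
rewrite -/(steps N w _) IH => /existsP [p' /andP[]].
rewrite mem_step1 => d H; exists p'; rewrite H andbT mem_step.
by apply/existsP; exists p; rewrite pX.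
Qed.

Lemma set_lang_ex X w : set_lang N X w = [exists p in X, state_lang N p w].
Proof.
rewrite /state_lang /set_lang.
apply/set0Pn/existsP => [[q]|[p /andP[pX /set0Pn [q]]]].
  rewrite inE => /andP[]; rewrite mem_steps => /existsP [p /andP[pX H]] qF.
  by exists p; rewrite pX /=; apply/set0Pn; exists q; rewrite inE H.
rewrite inE => /andP[H qF]; exists q; rewrite inE qF andbT mem_steps.
by apply/existsP; exists p; rewrite pX.
Qed.

Definition L := nfa_lang N.
Definition ctxL (v w : seq Sigma) := forall x y, L (x ++ v ++ y) = L (x ++ w ++ y).
Definition Rq (v w : seq Sigma) := forall q y,
  state_lang N q (v ++ y) = state_lang N q (w ++ y).

Lemma L_split x v y : L (x ++ v ++ y) = [exists p in steps N x (init N), state_lang N p (v ++ y)].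
Proof. by rewrite /L /nfa_lang -set_lang_ex /set_lang steps_cat. Qed.

Lemma Rq_ctx v w : Rq v w -> ctxL v w.
Proof.
move=> H x y; rewrite !L_split; apply: eq_existsb => p; by rewrite H.
Qed.

Definition ctype (xy : seq Sigma * seq Sigma) : {set Q} * {set Q} :=
  (steps N xy.1 (init N), [set p | state_lang N p xy.2]).

Lemma L_ctype x v y :
  L (x ++ v ++ y) = [exists p in steps N v (ctype (x, y)).1, p \in (ctype (x, y)).2].
Proof.
rewrite /L /nfa_lang /set_lang !steps_cat -/(set_lang N _ y) set_lang_ex /=.
apply: eq_existsb => p; by rewrite inE.
Qed.

Lemma rev_steps u : forall X q,
  (q \in steps (rev_nfa N) u X) = (steps N (rev u) [set q] :&: X != set0).
Proof.
elim: u => [|a u IH] X q.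
  rewrite /steps /=; apply/idP/set0Pn => [qX|[p]].
    by exists q; rewrite inE in_set1 eqxx.
  by rewrite inE in_set1 => /andP[/eqP ->].
rewrite /steps /= -/(steps _ u _) IH rev_cons -cats1 -/(steps N _ _) steps_cat.
rewrite {2}/steps /=.
apply/set0Pn/set0Pn => [[p]|[p']].
  rewrite !inE => /andP[pS] /existsP [p' /andP[p'X d]].
  by exists p'; rewrite !inE p'X andbT; apply/existsP; exists p; rewrite pS.
rewrite !inE => /andP[] /existsP [p /andP[pS d]] p'X.
by exists p; rewrite !inE pS /=; apply/existsP; exists p'; rewrite p'X.
Qed.


Lemma beval_ctx v w e : ctxL v w -> forall y, beval L e (v ++ y) = beval L e (w ++ y).
Proof.
move=> H; elim: e => [u t| |e IH|e1 IH1 e2 IH2] y /=.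
- by rewrite -!catA.
- by [].
- by rewrite IH.
- by rewrite IH1 IH2.
Qed.

Definition BAnd (e1 e2 : bexpr Sigma) := BCompl (BUnion (BCompl e1) (BCompl e2)).

Lemma bool_expr P : forall f : seq bool -> bool, exists e, forall w,
  beval L e w = f (map (fun xy => L (xy.1 ++ w ++ xy.2)) P).
Proof.
elim: P => [|xy P IH] f /=.
  case E: (f [::]); [exists (BCompl (BEmpty Sigma)) | exists (BEmpty Sigma)]; by [].
case: (IH (fun bs => f (true :: bs))) => e1 H1.
case: (IH (fun bs => f (false :: bs))) => e0 H0.
exists (BUnion (BAnd (BQuot xy.1 xy.2) e1) (BAnd (BCompl (BQuot xy.1 xy.2)) e0)) => w /=.
rewrite H1 H0; by case: (L _); case: (f _); case: (f _).
Qed.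

Lemma subatomic_ctx : subatomic N -> forall v w, ctxL v w -> Rq v w.
Proof.
move=> S v w H q y; case: (S q) => e He; rewrite !He; exact: beval_ctx.
Qed.

Definition pickctx (k : {set Q} * {set Q}) : seq Sigma * seq Sigma :=
  epsilon (inhabits ([::], [::])) (fun xy => ctype xy = k).

Definition Pctx := map pickctx (enum [set: {set Q} * {set Q}]).

Definition profile w := map (fun xy => L (xy.1 ++ w ++ xy.2)) Pctx.

Lemma profile_ctx v w : profile v = profile w -> ctxL v w.
Proof.
move/esym/eq_in_map => H x y.
have E : ctype (pickctx (ctype (x, y))) = ctype (x, y).
  by apply: (epsilon_spec (inhabits ([::], [::])) (fun xy => ctype xy = _)); exists (x, y).
have M : pickctx (ctype (x, y)) \in Pctx by apply: map_f; rewrite mem_enum inE.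
have := H _ M; rewrite /=.
case: (pickctx _) E => x' y' E.
rewrite !L_ctype E => ->; by [].
Qed.

Lemma ctx_subatomic : (forall v w, ctxL v w -> Rq v w) -> subatomic N.
Proof.
move=> H q.
pose f bs := if excluded_middle_informative
   (exists v, profile v = bs /\ state_lang N q v) then true else false.
case: (bool_expr Pctx f) => e He; exists e => w; rewrite He -/(profile w) /f.
case: excluded_middle_informative => [[v [Pv Lv]]|nE].
  have := H _ _ (profile_ctx Pv) q [::]; rewrite !cats0 => <-; by [].
by case E: (state_lang N q w) => //; case: nE; exists w.
Qed.


Definition r1 (w : seq Sigma) := @rsc_trans _ _ (rev_nfa N) w.
Definition r2 (w : seq Sigma) := syn_ctx (rev_lang L) w.

Lemma r1eq v w : r1 v = r1 w <-> Rq (rev v) (rev w).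
Proof.
split => [E q y|H].
  pose X : rsc_state (rev_nfa N) := exist _ (steps (rev_nfa N) (rev y) (init (rev_nfa N))) (ex_intro _ (rev y) erefl).
  have := congr1 (fun f => proj1_sig (f X)) E; rewrite /= -!steps_cat.
  move/setP/(_ q); rewrite !rev_steps !rev_cat revK; by [].
apply: functional_extensionality => -[X [u EX]]; apply: sig_eq => /=.
rewrite EX -!steps_cat; apply/setP => q; rewrite !rev_steps !rev_cat; exact: H.
Qed.

Lemma r2eq v w : r2 v = r2 w <-> ctxL (rev v) (rev w).
Proof.
rewrite /r2 /syn_ctx /rev_lang; split => [E x y|H].
  have := congr1 (fun f => f (rev y) (rev x)) E; rewrite /= !rev_cat !revK -!catA; by [].
apply: functional_extensionality => x; apply: functional_extensionality => y.
by rewrite !rev_cat -!catA H.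
Qed.

Lemma ker12 v w : r1 v = r1 w -> r2 v = r2 w.
Proof. by move=> /r1eq /Rq_ctx /r2eq. Qed.

Lemma r2_cong a a' b b' : r2 a = r2 a' -> r2 b = r2 b' -> r2 (a ++ b) = r2 (a' ++ b').
Proof.
rewrite /r2 /syn_ctx => Ea Eb.
apply: functional_extensionality => x; apply: functional_extensionality => y.
have := congr1 (fun f => f x (b ++ y)) Ea; rewrite /= !catA => ->.
have := congr1 (fun f => f (x ++ a') y) Eb; rewrite /= -!catA; by [].
Qed.

End Aut.

Lemma elt_eq (S T : Type) (r : seq S -> T) a b : r a = r b -> wq_elt r a = wq_elt r b.
Proof. by move=> E; apply: sig_eq. Qed.


Theorem theorem4p12 (Sigma Q : finType) (N : nfa Sigma Q) :
  subatomic N <->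
  monoid_iso (rsc_transition_monoid (rev_nfa N))
             (syntactic_monoid (rev_lang (nfa_lang N))).
Proof.
have phiE : forall w, wq_elt (r2 N) (wq_rep (wq_elt (@r1 _ _ N) w)) = wq_elt (r2 N) w.
  by move=> w; apply: elt_eq; apply: ker12; apply: r_rep.
split => [S|[f [[finv fK fK'] _]]].
  have H := subatomic_ctx S.
  have k21 : forall a b, r2 N a = r2 N b -> @r1 _ _ N a = @r1 _ _ N b.
    by move=> a b /r2eq /H /r1eq.
  exists (fun t : wq_car (@r1 _ _ N) => wq_elt (r2 N) (wq_rep t)); split; [|split].
  - exists (fun s : wq_car (r2 N) => wq_elt (@r1 _ _ N) (wq_rep s)) => t.
      by rewrite -{2}(wq_elt_rep t); apply: elt_eq; apply: k21; apply: r_rep.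
    by rewrite -{2}(wq_elt_rep t); apply: elt_eq; apply: ker12; apply: r_rep.
  - move=> s t /=; rewrite /wq_mul phiE; apply: elt_eq.
    by apply: r2_cong; rewrite r_rep.
  - by rewrite /= phiE.
have Hctx : forall v w, ctxL N v w -> Rq N v w.
  move=> v w Hvw.
  pose g (t : wq_car (@r1 _ _ N)) : wq_car (@r1 _ _ N) := finv (wq_elt (r2 N) (wq_rep t)).
  have gsurj : forall t, exists s, g s = t.
    move=> t; exists (wq_elt (@r1 _ _ N) (wq_rep (f t))); rewrite /g phiE wq_elt_rep.
    exact: fK.
  pose code (t : wq_car (@r1 _ _ N)) : {ffun {set Q} -> {set Q}} := [ffun X : {set Q} => steps (rev_nfa N) (wq_rep t) X].
  have code_inj : injective code.
    move=> s t E; rewrite -(wq_elt_rep s) -(wq_elt_rep t); apply: elt_eq.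
    apply: functional_extensionality => X; apply: sig_eq => /=.
    by have := congr1 (fun F : {ffun {set Q} -> {set Q}} => F (proj1_sig X)) E; rewrite /= !ffunE.
  have ginj := fin_surj_inj code_inj gsurj.
  have E2 : r2 N (rev v) = r2 N (rev w) by apply/r2eq; rewrite !revK.
  have : g (wq_elt (@r1 _ _ N) (rev v)) = g (wq_elt (@r1 _ _ N) (rev w)).
    by rewrite /g !phiE (elt_eq E2).
  move/ginj/(congr1 (@proj1_sig _ _)) => /= /r1eq; by rewrite !revK.
exact: ctx_subatomic.
Qed.
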